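(* Let $(t_n)_{n\ge1}$ be $\mathbb N$-valued random variables on a probability space, adapted to a filtration $(\mathcal F_n)_{n\ge0}$ (i.e. $t_n$ is $\mathcal F_n$-measurable), and let $p\colon\mathbb N\to[0,1]$ be such that $\mathbb P[t_n=T\mid\mathcal F_{n-1}]\le p(T)$ for all $n,T$, and $R:=\sum_{T=1}^\infty Tp(T)<\infty$. Then $\limsup_{n\to\infty}\frac1n\sum_{k=1}^nt_k\le R$ almost surely. *)

(* Defs.v *)
From HB Require Import structures.
From mathcomp Require Import all_boot all_order all_algebra.
From mathcomp Require Import all_classical all_reals all_analysis.
Set Implicit Arguments. Unset Strict Implicit. Unset Printing Implicit Defensive.
Import Order.TTheory GRing.Theory Num.Theory.
Local Open Scope classical_set_scope.
Local Open Scope ring_scope.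

Definition is_filtration d (T : measurableType d) (F : nat -> set (set T)) :=
  (forall n, sigma_algebra setT (F n)) /\
  (forall n, F n `<=` measurable) /\
  (forall n, F n `<=` F n.+1).

(* t_n : T -> nat is F_n-measurable (nat carries the discrete sigma-algebra),
   for every n >= 1. *)
Definition adapted_from1 d (T : measurableType d) (F : nat -> set (set T))
    (t : nat -> T -> nat) :=
  forall n, (1 <= n)%N -> forall B : set nat, F n (t n @^-1` B).

(* P[t_n = k | F_{n-1}] <= p k  a.s., expressed through the defining property
   of conditional probability: for every A in F_{n-1},
   P(A /\ {t_n = k}) = E[1_A P[t_n = k | F_{n-1}]] <= p k * P(A). *)
Definition cond_prob_bound d (T : measurableType d) (R : realType)
    (P : probability T R) (F : nat -> set (set T)) (t : nat -> T -> nat)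
    (p : nat -> R) :=
  forall n, (1 <= n)%N -> forall k : nat, forall A, F n.-1 A ->
    (P (A `&` [set w | t n w = k]) <= (p k)%:E * P A)%E.

(* Main.v *)
Require Import Defs.
From HB Require Import structures.
From mathcomp Require Import all_boot all_order all_algebra.
From mathcomp Require Import all_classical all_reals all_analysis.
From mathcomp Require Import lra zify ring.
Import Order.TTheory GRing.Theory Num.Theory.
Set Implicit Arguments. Unset Strict Implicit. Unset Printing Implicit Defensive.
Local Open Scope classical_set_scope.
Local Open Scope ring_scope.

Section sig.
Variables (T : Type) (G : set (set T)).
Hypothesis hG : sigma_algebra setT G.
Lemma sa0 : G set0. Proof. by case: hG. Qed.
Lemma saC A : G A -> G (~` A). Proof. by case: hG => _ h _ /h; rewrite setTD. Qed.
Lemma saT : G setT. Proof. rewrite -setC0; exact: saC sa0. Qed.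
Lemma saU (A : nat -> set T) : (forall n, G (A n)) -> G (\bigcup_n A n).
Proof. by case: hG => _ _; apply. Qed.
Lemma saU2 A B : G A -> G B -> G (A `|` B).
Proof. move=> hA hB; rewrite -bigcup2E; apply: saU => -[|[|n]] //=; exact: sa0. Qed.
Lemma saI A B : G A -> G B -> G (A `&` B).
Proof. move=> hA hB; rewrite -(setCK (A `&` B)) setCI; apply/saC/saU2; exact: saC. Qed.
End sig.

Section pr.
Context d (T : measurableType d) (R : realType) (P : probability T R).
Definition pr (A : set T) : R := fine (P A).
Lemma prE A : measurable A -> P A = (pr A)%:E.
Proof.
move=> mA; rewrite /pr fineK// ge0_fin_numE//.
by rewrite (le_lt_trans (probability_le1 P mA))// ltey.
Qed.
Lemma pr_ge0 A : 0 <= pr A.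
Proof. by rewrite /pr fine_ge0. Qed.
Lemma pr_le A B : measurable A -> measurable B -> A `<=` B -> pr A <= pr B.
Proof. by move=> mA mB AB; rewrite -lee_fin -!prE//; apply: le_measure => //; rewrite inE. Qed.
Lemma pr0 : pr set0 = 0.
Proof. by rewrite /pr measure0. Qed.
Lemma prT : pr setT = 1.
Proof. by rewrite /pr probability_setT. Qed.

Lemma pr_part (B : set T) (h : T -> nat) (M : nat) :
  measurable B -> (forall a, measurable [set w | h w = a]) ->
  (forall w, (h w < M)%N) ->
  pr B = \sum_(a < M) pr (B `&` [set w | h w = a]).
Proof.
move=> mB mh hM.
have mF : forall a, measurable (B `&` [set w | h w = a]) by move=> a; exact: measurableI.
have tF : trivIset setT (fun a => B `&` [set w | h w = a]).
  by move=> i j _ _ [w [[_ <-] [_ <-]]].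
have E : P (\big[setU/set0]_(i < M) (B `&` [set w | h w = i])) =
    \sum_(i < M) P (B `&` [set w | h w = i]) by exact: (measure_bigsetU P mF tF M).
move: E; rewrite -(bigcup_mkord M (fun i => B `&` [set w | h w = i])).
have -> : \bigcup_(i in `I_M) (B `&` [set w | h w = i]) = B.
  apply/seteqP; split => [w [i _ []]//|w Bw]; exists (h w) => //=.
rewrite prE// => E.
apply: EFin_inj; rewrite -sumEFin E.
by apply: eq_bigr => i _; rewrite prE.
Qed.
End pr.
Lemma eqleR (R : numDomainType) (x y : R) : x = y -> x <= y.
Proof. by move=> ->. Qed.

Fixpoint nq (m j : nat) : nat :=
  if j is j'.+1 then (nq m j' + nq m j' %/ m.+1 + 1)%N else 1%N.

Lemma nq_pos m j : (0 < nq m j)%N.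
Proof. by case: j => //= j; rewrite addn1. Qed.
Lemma nq_lt m j : (nq m j < nq m j.+1)%N.
Proof. by rewrite /= addn1 ltnS leq_addr. Qed.
Lemma nq_ge m j : (j < nq m j)%N.
Proof. elim: j => [|j IH]; [exact: nq_pos|exact: leq_ltn_trans IH (nq_lt m j)]. Qed.
Lemma nq_mono m j k : (j <= k)%N -> (nq m j <= nq m k)%N.
Proof.
move=> /subnK <-; elim: (k - j)%N => [//|i IH].
by rewrite addSn; apply: leq_trans IH (ltnW (nq_lt _ _)).
Qed.
Lemma nq_grow m j : (m.+2 * nq m j <= m.+1 * nq m j.+1)%N.
Proof.
rewrite /=; set a := nq m j.
have := ltn_ceil a (ltn0Sn m); rewrite mulSn mulnDr mulnDr.
rewrite [(m.+1 * a)%N]mulnC [(m.+1 * (a %/ m.+1))%N]mulnC; lia.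
Qed.
Lemma nq_up m j : (nq m j.+1 <= nq m j + nq m j %/ m.+1 + 1)%N.
Proof. by []. Qed.

Lemma nq_interp m J n : (nq m J <= n)%N ->
  exists j, [/\ (J <= j)%N, (nq m j <= n)%N & (n < nq m j.+1)%N].
Proof.
move=> Jn.
suff H : forall i, (n < nq m (J + i))%N ->
    exists j, [/\ (J <= j)%N, (nq m j <= n)%N & (n < nq m j.+1)%N].
  apply: (H n.+1); apply: (leq_ltn_trans _ (nq_ge m (J + n.+1))); lia.
elim=> [|i IH]; first by rewrite addn0 ltnNge Jn.
have [h|h] := ltnP n (nq m (J + i)); first by move=> _; exact: IH.
by move=> h2; exists (J + i)%N; split => //; [exact: leq_addr|rewrite -addnS].
Qed.

Section tele.
Variable R : realType.
Lemma tele m (y : nat) J : (0 < y)%N ->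
  \sum_(j < J) (if (y <= nq m j)%N then (nq m j)%:R^-1 else 0) <= m.+2%:R / y%:R :> R.
Proof.
move=> y0.
pose f (j : nat) : R := (maxn y (nq m j))%:R^-1.
have f0 : forall j, 0 <= f j by move=> j; rewrite /f invr_ge0.
apply: (@le_trans _ _ (\sum_(j < J) m.+2%:R * (f j - f j.+1))).
  apply: ler_sum => j _.
  have hle := nq_lt m j; have hg := nq_grow m j.
  have n0 := nq_pos m j.
  case: ifP => hy.
    rewrite /f (maxn_idPr hy) (maxn_idPr (leq_trans hy (ltnW hle))).
    have hnj : 0 < (nq m j)%:R :> R by rewrite ltr0n.
    have hnj1 : 0 < (nq m j.+1)%:R :> R by rewrite ltr0n (leq_trans n0 (ltnW hle)).
    have hg' : m.+2%:R * (nq m j)%:R <= m.+1%:R * (nq m j.+1)%:R :> R.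
      by rewrite -!natrM ler_nat.
    move: hg' hnj hnj1; rewrite -natr1.
    move: (nq m j)%:R (nq m j.+1)%:R (m.+1)%:R => a b M hg2 ha hb.
    have iaa : a * a^-1 = 1 by rewrite mulfV // lt0r_neq0.
    have ibb : b * b^-1 = 1 by rewrite mulfV // lt0r_neq0.
    have ia0 : 0 < a^-1 by rewrite invr_gt0.
    have ib0 : 0 < b^-1 by rewrite invr_gt0.
    have : (M + 1) * a * (a^-1 * b^-1) <= M * b * (a^-1 * b^-1).
      by rewrite ler_wpM2r // mulr_ge0 // ltW.
    have -> : (M + 1) * a * (a^-1 * b^-1) = (M + 1) * b^-1.
      by rewrite -mulrA (mulrA a) iaa mul1r.
    have -> : M * b * (a^-1 * b^-1) = M * a^-1.
      by rewrite -mulrA (mulrC a^-1) (mulrA b) ibb mul1r.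
    lra.
  apply: mulr_ge0 => //; rewrite subr_ge0 /f.
  rewrite lef_pV2 ?posrE ?ltr0n ?leq_max ?y0 // ler_nat geq_max leq_maxl /=.
  by rewrite leq_max (ltnW hle) orbT.
rewrite -big_distrr /= ler_pM2l ?ltr0n //.
rewrite (_ : \sum_(j < J) (f j - f j.+1) = f 0%N - f J).
  by rewrite {1}/f /= (maxn_idPl y0) lerBlDr lerDl f0.
rewrite -(big_mkord xpredT (fun j => f j - f j.+1)).
rewrite -[RHS]opprB -telescope_sumr // -sumrN; apply: eq_bigr => i _.
by rewrite opprB.
Qed.
End tele.
Section model.
Context d (T : measurableType d) (R : realType) (P : probability T R)
  (F : nat -> set (set T)) (t : nat -> T -> nat) (p : nat -> R).
Hypothesis hF : is_filtration F.
Hypothesis ht : adapted_from1 F t.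

Definition Y n (x : nat) : nat := if (x <= n)%N then x else 0%N.
Definition yv n w := Y n (t n w).
Definition S n w := (\sum_(1 <= k < n.+1) yv k w)%N.

Lemma S0 w : S 0 w = 0%N.
Proof. by rewrite /S big_geq. Qed.
Lemma SS n w : S n.+1 w = (S n w + yv n.+1 w)%N.
Proof. by rewrite /S big_nat_recr. Qed.
Lemma yv_le n w : (yv n w <= n)%N.
Proof. by rewrite /yv /Y; case: ifP. Qed.
Lemma S_le n w : (S n w <= n * n)%N.
Proof.
elim: n => [|n IH]; first by rewrite S0.
rewrite SS; have := yv_le n.+1 w; rewrite mulSn mulnS; lia.
Qed.

Lemma Fsa n : sigma_algebra setT (F n). Proof. by case: hF. Qed.
Lemma Fm n A : F n A -> measurable A. Proof. by case: hF => _ [h _]; apply: h. Qed.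
Lemma Fmono m n A : (m <= n)%N -> F m A -> F n A.
Proof.
move=> /subnK <-; elim: (n - m)%N => [//|k IH] /IH.
by case: hF => _ [_ h]; rewrite addSn; apply: h.
Qed.

Lemma F_y n B : (1 <= n)%N -> F n (yv n @^-1` B).
Proof. by move=> n1; apply: (ht n1 (Y n @^-1` B)). Qed.

Lemma F_S n B : F n (S n @^-1` B).
Proof.
elim: n B => [|n IH] B.
  have [B0|B0] := pselect (B 0%N).
    rewrite (_ : _ @^-1` _ = setT); first exact: saT (Fsa 0).
    by apply/seteqP; split => // w _; rewrite /preimage/= S0.
  rewrite (_ : _ @^-1` _ = set0); first exact: sa0 (Fsa 0).
  by apply/seteqP; split => // w; rewrite /preimage/= S0.
rewrite (_ : _ @^-1` _ = \bigcup_i (S n @^-1` (fun a => B (a + i)%N) `&` yv n.+1 @^-1` [set i])).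
  apply: (saU (Fsa n.+1)) => i; apply: (saI (Fsa n.+1)); last exact: F_y.
  exact: (Fmono (leqnSn n)).
apply/seteqP; split => w /=.
  by rewrite SS => Bw; exists (yv n.+1 w) => //.
by move=> [i _ [/= h1 h2]]; rewrite SS h2.
Qed.

Lemma mS n B : measurable (S n @^-1` B). Proof. exact: Fm (F_S n B). Qed.
Lemma my n B : (1 <= n)%N -> measurable (yv n @^-1` B). Proof. by move=> n1; exact: Fm (F_y B n1). Qed.
End model.
Section det.
Variable R : realType.
Variables (a : nat -> nat) (r : R) (K : nat).
Hypothesis r0 : 0 <= r.
Hypothesis hK : forall k, (K <= k)%N -> (a k.+1 <= k.+1)%N.
Definition dS n := (\sum_(1 <= k < n.+1) Y k (a k))%N.
Hypothesis hJ : forall m, exists J, forall j, (J <= j)%N ->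
  (dS (nq m j))%:R <= (nq m j)%:R * (r + m.+1%:R^-1).

Lemma dSS n : dS n.+1 = (dS n + Y n.+1 (a n.+1))%N.
Proof. by rewrite /dS big_nat_recr. Qed.

Lemma dS_mono n n' : (n <= n')%N -> (dS n <= dS n')%N.
Proof.
move=> /subnK <-; elim: (n' - n)%N => [//|i IH].
by rewrite addSn dSS; apply: leq_trans IH (leq_addr _ _).
Qed.

Lemma detA n : (\sum_(1 <= k < n.+1) a k <= \sum_(1 <= k < K.+1) a k + dS n)%N.
Proof.
elim: n => [|n IH]; first by rewrite big_geq.
case: (leqP K n) => Kn.
  rewrite big_nat_recr //= dSS.
  have -> : Y n.+1 (a n.+1) = a n.+1 by rewrite /Y hK.
  lia.
rewrite (@big_cat_nat _ _ _ n.+2 1 K.+1) //=; lia.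
Qed.

Lemma detB m : exists N, forall n, (N <= n)%N ->
  (n%:R)^-1 * \sum_(1 <= k < n.+1) (a k)%:R <= r + (r + 3) / m.+1%:R.
Proof.
have [J hJm] := hJ m.
set C := (\sum_(1 <= k < K.+1) a k)%N.
set dl : R := m.+1%:R^-1.
have dl0 : 0 < dl by rewrite invr_gt0 ltr0n.
have dl1 : dl <= 1 by rewrite /dl invf_le1 ?ltr0n // ler1n.
have dlm : dl * m.+1%:R = 1 by rewrite mulVf // pnatr_eq0.
exists (maxn (nq m J) (Num.truncn ((C%:R + r + 1) * m.+1%:R)).+1) => n.
rewrite geq_max => /andP[Jn Tn].
have [j [Jj jn nj]] := nq_interp Jn.
have n0 : (0 < n)%N by apply: leq_trans Tn.
have hn : 0 < n%:R :> R by rewrite ltr0n.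
have hX : (\sum_(1 <= k < n.+1) (a k)%:R) <= C%:R + (dS n)%:R :> R.
  by rewrite -natr_sum -natrD ler_nat detA.
have hS : (dS n)%:R <= (nq m j.+1)%:R * (r + dl) :> R.
  apply: le_trans (hJm _ (leq_trans Jj (leqnSn _))).
  by rewrite ler_nat dS_mono // ltnW.
have hq : (nq m j.+1)%:R <= n%:R * (1 + dl) + 1 :> R.
  have h1 := nq_up m j.
  have h2 : ((nq m j %/ m.+1) * m.+1 <= nq m j)%N by exact: leq_divM.
  have h3 : (nq m j %/ m.+1)%:R <= (nq m j)%:R * dl :> R.
    by rewrite /dl ler_pdivlMr ?ltr0n // -natrM ler_nat.
  have h4 : (nq m j)%:R <= n%:R :> R by rewrite ler_nat.
  apply: le_trans (_ : ((nq m j) + (nq m j %/ m.+1) + 1)%:R <= _).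
    by rewrite ler_nat.
  rewrite !natrD; have := ltW dl0; nra.
have hT : (C%:R + r + 1) < n%:R * dl.
  have := truncnS_gt ((C%:R + r + 1) * m.+1%:R).
  have : ((Num.truncn ((C%:R + r + 1) * m.+1%:R)).+1%:R <= n%:R :> R) by rewrite ler_nat.
  move=> h5 h6; have h7 := lt_le_trans h6 h5.
  by rewrite /dl ltr_pdivlMr ?ltr0n.
rewrite ler_pdivrMl //.
have -> : (r + 3) / m.+1%:R = dl * (r + 3) by rewrite mulrC.
move: hX hS hq hT; move: (\sum_(1 <= k < n.+1) (a k)%:R) (dS n)%:R (nq m j.+1)%:R => X Sn Q.
move=> hX hS hq hT.
have C0 : 0 <= C%:R :> R by [].
have hQ : Q * (r + dl) <= (n%:R * (1 + dl) + 1) * (r + dl).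
  by rewrite ler_wpM2r // addr_ge0 // ltW.
have hdd : n%:R * dl * dl <= n%:R * dl.
  by rewrite ler_piMr // mulr_ge0 // ltW.
move: (n%:R) hn hdd hQ hT => N hn hdd hQ hT.
have e1 : (N * (1 + dl) + 1) * (r + dl) = N * r + N * dl * r + N * dl + N * dl * dl + r + dl by ring.
rewrite e1 in hQ.
have e2 : N * (r + dl * (r + 3)) = N * r + N * dl * r + 3 * (N * dl) by ring.
rewrite e2; lra.
Qed.

Lemma detC : (limn_esup (fun n => ((n%:R)^-1 * \sum_(1 <= k < n.+1) (a k)%:R)%:E) <= r%:E)%E.
Proof.
rewrite limn_esup_lim; apply/lee_addgt0Pr => e e0.
set m := Num.truncn ((r + 3) / e).
have [N hN] := detB m.
have hm : (r + 3) / m.+1%:R <= e.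
  have h := truncnS_gt ((r + 3) / e).
  rewrite ler_pdivrMr ?ltr0n //; move: h; rewrite ltr_pdivrMr // => h.
  by rewrite mulrC; exact: ltW h.
apply: lime_le; first exact: is_cvg_esups.
exists N => // n /= Nn.
apply: ge_ereal_sup => _ [k /= nk <-].
rewrite lee_fin; apply: le_trans (hN k (leq_trans Nn nk)) _.
by rewrite lerD2l.
Qed.
End det.
Lemma sum_if_eq (R : nzRingType) (K c : nat) (f : nat -> R) : (c < K)%N ->
  \sum_(b < K) (if c == b :> nat then f b else 0) = f c.
Proof.
move=> cK; rewrite (bigD1 (Ordinal cK)) //= eqxx big1 ?addr0 // => i.
by rewrite -val_eqE /= eq_sym => /negbTE ->.
Qed.

Section main.
Context d (T : measurableType d) (R : realType) (P : probability T R)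
  (F : nat -> set (set T)) (t : nat -> T -> nat) (p : nat -> R) (r : R).
Hypothesis hF : is_filtration F.
Hypothesis ht : adapted_from1 F t.
Hypothesis hp : forall k, 0 <= p k <= 1.
Hypothesis hb : cond_prob_bound P F t p.
Hypothesis hr : forall N, \sum_(k < N) k%:R * p k <= r.

Local Notation pr := (pr P).
Local Notation yv := (yv t).
Local Notation S := (S t).

Lemma r_ge0 : 0 <= r.
Proof. by have := hr 0; rewrite big_ord0. Qed.
Lemma p_ge0 k : 0 <= p k. Proof. by case/andP: (hp k). Qed.

Lemma Kb n A k : F n A -> (1 <= k <= n.+1)%N ->
  pr (A `&` [set w | yv n.+1 w = k]) <= p k * pr A.
Proof.
move=> FA /andP[k1 kn].
have := hb (n:=n.+1) (ltn0Sn n) k FA.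
have mA : measurable A := Fm hF FA.
have mt : measurable [set w | t n.+1 w = k].
  by apply: (Fm hF); apply: (ht (ltn0Sn n) [set k]).
rewrite (_ : A `&` [set w | t n.+1 w = k] = A `&` [set w | yv n.+1 w = k]).
  have mAy : measurable (A `&` [set w | yv n.+1 w = k]).
    by apply: measurableI => //; exact: (my hF ht [set k] (ltn0Sn n)).
  by rewrite (prE P mAy) (prE P mA) -EFinM lee_fin.
apply/seteqP; split => w [Aw /= h]; split => //.
  by rewrite /yv /Y h kn.
by move: h; rewrite /yv /Y; case: ifP => _ h //; move: k1; rewrite -h.
Qed.

Definition z n (a : nat) : R := Num.max (a%:R - n%:R * r) 0.
Definition Phi n := \sum_(b < (n*n).+1) (z n b)^+2 * pr [set w | S n w = b].
Definition v n := \sum_(y < n.+1) (y%:R)^+2 * p y.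
Definition q n a y := pr ([set w | S n w = a] `&` [set w | yv n.+1 w = y]).

Lemma z_ge0 n a : 0 <= z n a. Proof. by rewrite /z le_max lexx orbT. Qed.

Lemma ptw n (a y : nat) :
  z n.+1 (a + y) ^+ 2 + 2 * r * z n a <=
  z n a ^+ 2 + 2 * z n a * y%:R + y%:R ^+ 2 + r ^+ 2.
Proof.
have r0 := r_ge0; have y0 : 0 <= y%:R :> R by [].
rewrite /z natrD -addn1 natrD mulrDl mul1r.
set X := a%:R - n%:R * r.
have -> : a%:R + y%:R - (n%:R * r + r) = X + (y%:R - r) by rewrite /X; ring.
move: (y%:R) y0 => Y Y0.
rewrite !maxEle; case: ifP => h1; case: ifP => h2; nra.
Qed.

Lemma mSe n a : measurable [set w | S n w = a].
Proof. exact: (mS hF ht n [set a]). Qed.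
Lemma mye n y : measurable [set w | yv n.+1 w = y].
Proof. exact: (my hF ht [set y] (ltn0Sn n)). Qed.
Lemma S_lt n w : (S n w < (n * n).+1)%N.
Proof. by rewrite ltnS S_le. Qed.
Lemma yv_lt n w : (yv n.+1 w < n.+2)%N.
Proof. by rewrite ltnS yv_le. Qed.

Lemma q_ge0 n a y : 0 <= q n a y. Proof. exact: pr_ge0. Qed.

Lemma distS n b : pr [set w | S n.+1 w = b] =
  \sum_(a < (n*n).+1) \sum_(y < n.+2) (if (a + y == b)%N then q n a y else 0).
Proof.
rewrite (pr_part P (mSe n.+1 b) (@mSe n) (@S_lt n)).
apply: eq_bigr => a _.
rewrite (pr_part P (measurableI _ _ (mSe n.+1 b) (mSe n a)) (@mye n) (@yv_lt n)).
apply: eq_bigr => y _; rewrite /q.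
case: eqP => [<-|ne].
  congr pr; apply/seteqP; split => [w [[]]//|w [/= h1 h2]].
  by split => //; split => //=; rewrite SS h1 h2.
rewrite (_ : _ `&` _ = set0) ?pr0//.
by apply/seteqP; split => // w [[/= h1 h2] h3]; apply: ne; rewrite -h1 SS h2 h3.
Qed.
Lemma Phi_split n : Phi n.+1 =
  \sum_(a < (n*n).+1) \sum_(y < n.+2) z n.+1 (a + y) ^+ 2 * q n a y.
Proof.
rewrite /Phi.
under eq_bigr do rewrite distS big_distrr /=.
rewrite exchange_big /=; apply: eq_bigr => a _.
under eq_bigr do rewrite big_distrr /=.
rewrite exchange_big /=; apply: eq_bigr => y _.
rewrite -(@sum_if_eq _ ((n.+1 * n.+1).+1) (a + y) (fun b => z n.+1 b ^+ 2 * q n a y)).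
  by apply: eq_bigr => b _; case: eqP => _; rewrite ?mulr0.
have := ltn_ord a; have := ltn_ord y; rewrite !ltnS mulSn mulnS => h1 h2; lia.
Qed.

Lemma margA n a : \sum_(y < n.+2) q n a y = pr [set w | S n w = a].
Proof. by rewrite (pr_part P (mSe n a) (@mye n) (@yv_lt n)). Qed.

Lemma margB n y : \sum_(a < (n*n).+1) q n a y = pr [set w | yv n.+1 w = y].
Proof.
rewrite (pr_part P (mye n y) (@mSe n) (@S_lt n)).
by apply: eq_bigr => a _; rewrite /q setIC.
Qed.

Lemma margT n : \sum_(a < (n*n).+1) pr [set w | S n w = a] = 1.
Proof.
rewrite -(prT P) (pr_part P measurableT (@mSe n) (@S_lt n)).
by apply: eq_bigr => a _; rewrite setTI.
Qed.

Lemma inner_bound n a : \sum_(y < n.+2) y%:R * q n a y <= r * pr [set w | S n w = a].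
Proof.
apply: (@le_trans _ _ (\sum_(y < n.+2) y%:R * p y * pr [set w | S n w = a])).
  apply: ler_sum => y _; case: (posnP y) => [->|y0]; first by rewrite !mul0r.
  rewrite -mulrA ler_wpM2l//; apply: Kb; first exact: (F_S hF ht n [set a]).
  by rewrite y0 -ltnS ltn_ord.
by rewrite -big_distrl /= ler_wpM2r ?pr_ge0 //; exact: hr.
Qed.

Lemma sq_bound n y : (y < n.+2)%N -> y%:R ^+ 2 * pr [set w | yv n.+1 w = y] <= y%:R ^+2 * p y.
Proof.
move=> yn; case: (posnP y) => [->|y0]; first by rewrite expr0n /= !mul0r.
rewrite ler_wpM2l//; have := @Kb n setT y (saT (Fsa hF n)).
by rewrite setTI (prT P) mulr1; apply; rewrite y0 -ltnS.
Qed.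

Lemma Phi_step n : Phi n.+1 <= Phi n + v n.+1 + r ^+ 2.
Proof.
set ZA := \sum_(a < (n*n).+1) z n a * pr [set w | S n w = a].
have key :
  \sum_(a < (n*n).+1) \sum_(y < n.+2) z n.+1 (a + y) ^+ 2 * q n a y +
  \sum_(a < (n*n).+1) \sum_(y < n.+2) 2 * r * z n a * q n a y <=
  \sum_(a < (n*n).+1) \sum_(y < n.+2) z n a ^+ 2 * q n a y +
  \sum_(a < (n*n).+1) \sum_(y < n.+2) 2 * z n a * (y%:R * q n a y) +
  \sum_(a < (n*n).+1) \sum_(y < n.+2) y%:R ^+ 2 * q n a y +
  \sum_(a < (n*n).+1) \sum_(y < n.+2) r ^+ 2 * q n a y.
  rewrite -!big_split /=; apply: ler_sum => a _; rewrite -!big_split /=.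
  apply: ler_sum => y _; have := ptw n a y; have := q_ge0 n a y.
  move: (q n a y) (z n.+1 (a + y) ^+ 2) => Q Z; nra.
have e2 : \sum_(a < (n*n).+1) \sum_(y < n.+2) 2 * r * z n a * q n a y = 2 * r * ZA.
  rewrite /ZA big_distrr /=; apply: eq_bigr => a _.
  by rewrite -big_distrr /= margA mulrA.
have e3 : \sum_(a < (n*n).+1) \sum_(y < n.+2) z n a ^+ 2 * q n a y = Phi n.
  by rewrite /Phi; apply: eq_bigr => a _; rewrite -big_distrr /= margA.
have e4 : \sum_(a < (n*n).+1) \sum_(y < n.+2) 2 * z n a * (y%:R * q n a y) <= 2 * r * ZA.
  rewrite /ZA big_distrr /=; apply: ler_sum => a _.
  have h1 := inner_bound n a; have h2 := z_ge0 n a.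
  rewrite -big_distrr /=; move: h1.
  set s := \sum_(y < n.+2) _; move: (pr _) (z n a) h2 s => A Z h2 s h1; nra.
have e5 : \sum_(a < (n*n).+1) \sum_(y < n.+2) y%:R ^+ 2 * q n a y <= v n.+1.
  rewrite exchange_big /= /v; apply: ler_sum => y _.
  by rewrite -big_distrr /= margB sq_bound.
have e6 : \sum_(a < (n*n).+1) \sum_(y < n.+2) r ^+ 2 * q n a y = r ^+ 2.
  under eq_bigr do rewrite -big_distrr /= margA.
  by rewrite -big_distrr /= margT mulr1.
move: key; rewrite -Phi_split e2 e3 e6 => key.
have := e4; have := e5; lra.
Qed.
Lemma Phi0 : Phi 0 = 0.
Proof. by rewrite /Phi big_ord1 /z /= mul0r subr0 maxxx expr0n mul0r. Qed.

Lemma v_ge0 n : 0 <= v n.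
Proof. by apply: sumr_ge0 => i _; rewrite mulr_ge0 ?p_ge0 ?sqr_ge0. Qed.

Lemma vS n : v n <= v n.+1.
Proof. by rewrite /v [in leRHS]big_ord_recr /= lerDl mulr_ge0 ?p_ge0 ?sqr_ge0. Qed.

Lemma Phi_bound n : Phi n <= n%:R * (v n + r ^+ 2).
Proof.
elim: n => [|n IH]; first by rewrite Phi0 mul0r.
apply: (le_trans (Phi_step n)); have := vS n; have := v_ge0 n; have := r_ge0.
have N0 : 0 <= n%:R :> R by [].
rewrite -addn1 natrD; move: IH N0; move: (v n) (v n.+1) (n%:R) (Phi n) => a b N Q.
nra.
Qed.

Lemma Cheb n e : (0 < n)%N -> 0 < e ->
  pr [set w | n%:R * (r + e) < (S n w)%:R] <= (v n + r ^+ 2) / (n%:R * e ^+ 2).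
Proof.
move=> n0 e0.
have mE : measurable [set w | n%:R * (r + e) < (S n w)%:R].
  exact: (mS hF ht n [set b | n%:R * (r + e) < b%:R]).
have ne0 : 0 < n%:R * e :> R by rewrite mulr_gt0 // ltr0n.
rewrite (pr_part P mE (@mSe n) (@S_lt n)).
apply: (@le_trans _ _ (\sum_(b < (n*n).+1) (z n b ^+ 2 / (n%:R * e) ^+ 2) * pr [set w | S n w = b])).
  apply: ler_sum => b _.
  have [hb'|hb'] := boolP (n%:R * (r + e) < b%:R :> R).
    apply: (@le_trans _ _ (pr [set w | S n w = b])).
      apply: pr_le; [exact: measurableI mE (mSe n b)|exact: mSe|by move=> w []].
    rewrite ler_peMl ?pr_ge0// ler_pdivlMr ?exprn_gt0// mul1r.
    have h3 : n%:R * e <= z n b.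
      by rewrite /z le_max; apply/orP; left; move: hb'; rewrite mulrDr; lra.
    have := z_ge0 n b; move: (z n b) h3 (ltW ne0) => Z; move: (n%:R * e) => X; nra.
  have -> : [set w | n%:R * (r + e) < (S n w)%:R] `&` [set w | S n w = b] = set0.
    by apply/seteqP; split => // w [/= h1 h2]; move: hb'; rewrite -h2 h1.
  by rewrite pr0 mulr_ge0 ?pr_ge0 ?divr_ge0 ?sqr_ge0.
under eq_bigr do rewrite mulrAC.
rewrite -big_distrl /= -/(Phi n).
set D := (n%:R * e) ^+ 2.
have -> : (v n + r ^+ 2) / (n%:R * e ^+ 2) = n%:R * (v n + r ^+ 2) / D.
  rewrite /D; field; apply/andP; split; [exact: lt0r_neq0|rewrite pnatr_eq0 -lt0n//].
rewrite ler_pM2r ?invr_gt0 ?exprn_gt0 //; exact: Phi_bound.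
Qed.
Definition Ev m e j := [set w | (nq m j)%:R * (r + e) < (S (nq m j) w)%:R].

Lemma mEv m e j : measurable (Ev m e j).
Proof. exact: (mS hF ht _ [set b | (nq m j)%:R * (r + e) < b%:R]). Qed.

Lemma v_widen n K : (n < K)%N ->
  v n = \sum_(y < K) (if (y <= n)%N then y%:R ^+ 2 * p y else 0).
Proof.
move=> nK; rewrite /v (big_ord_widen _ (fun y => y%:R ^+ 2 * p y) nK) big_mkcond /=.
by apply: eq_bigr => y _; rewrite ltnS.
Qed.

Lemma sum_v_bound m J : \sum_(j < J) v (nq m j) / (nq m j)%:R <= m.+2%:R * r.
Proof.
pose K := (nq m J).+1.
apply: (@le_trans _ _ (\sum_(j < J) \sum_(y < K)
   y%:R ^+ 2 * p y * (if (y <= nq m j)%N then (nq m j)%:R^-1 else 0))).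
  apply: eqleR; apply: eq_bigr => j _.
  rewrite (@v_widen _ K); last by rewrite ltnS nq_mono // ltnW.
  rewrite big_distrl /=; apply: eq_bigr => y _.
  by case: ifP; rewrite ?mul0r ?mulr0.
rewrite exchange_big /=.
apply: (@le_trans _ _ (\sum_(y < K) m.+2%:R * (y%:R * p y))).
  apply: ler_sum => y _; rewrite -big_distrr /=.
  case: (posnP y) => [->|y0]; first by rewrite (_ : 0%:R = 0 :> R) // expr0n /= !mul0r mulr0.
  have hy : 0 < y%:R :> R by rewrite ltr0n.
  apply: (@le_trans _ _ (y%:R ^+ 2 * p y * (m.+2%:R / y%:R))).
    by rewrite ler_wpM2l ?mulr_ge0 ?sqr_ge0 ?p_ge0 // tele.
  apply: eqleR; rewrite expr2; field; rewrite lt0r_neq0 //.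
by rewrite -big_distrr /= ler_wpM2l // hr.
Qed.

Lemma sum_inv_bound m J : \sum_(j < J) (nq m j)%:R^-1 <= m.+2%:R :> R.
Proof.
have := @tele R m 1 J (ltn0Sn 0); rewrite divr1; apply: le_trans.
by apply: eqleR; apply: eq_bigr => j _; rewrite nq_pos.
Qed.

Lemma sumEv_bound m e J : 0 < e ->
  \sum_(j < J) pr (Ev m e j) <= m.+2%:R * (r + r ^+ 2) / e ^+ 2.
Proof.
move=> e0.
apply: (@le_trans _ _ (\sum_(j < J) (v (nq m j) + r ^+ 2) / ((nq m j)%:R * e ^+ 2))).
  by apply: ler_sum => j _; apply: Cheb => //; exact: nq_pos.
have e2 : 0 < e ^+ 2 by rewrite exprn_gt0.
apply: (@le_trans _ _ ((\sum_(j < J) v (nq m j) / (nq m j)%:R +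
     r ^+ 2 * \sum_(j < J) (nq m j)%:R^-1) / e ^+ 2)).
  rewrite big_distrr /= -big_split /= big_distrl /=; apply: eqleR.
  apply: eq_bigr => j _; have := nq_pos m j; rewrite -(ltr0n R) => hn.
  field; rewrite !lt0r_neq0 //.
rewrite ler_pM2r ?invr_gt0 // mulrDr.
have := sum_v_bound m J; have := sum_inv_bound m J; have := r_ge0.
move: (\sum_(j < J) _) (\sum_(j < J) _) => A B; nra.
Qed.
Lemma series_fin (u : nat -> R) (C : R) : (forall k, 0 <= u k) ->
  (forall J, \sum_(j < J) u j <= C) -> (\sum_(0 <= j <oo) (u j)%:E < +oo)%E.
Proof.
move=> u0 hC; apply: (@le_lt_trans _ _ C%:E); last exact: ltry.
apply: lime_le; first by apply: is_cvg_nneseries => n _ _; rewrite lee_fin.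
exists 0%N => // J _ /=.
by rewrite sumEFin lee_fin big_mkord.
Qed.

Lemma Ev_null m e : 0 < e -> P (lim_sup_set (Ev m e)) = 0%E.
Proof.
move=> e0; apply: lim_sup_set_cvg0; first exact: mEv.
rewrite (@eq_eseriesr _ (fun j => P (Ev m e j)) (fun j => (pr (Ev m e j))%:E)).
  apply: (series_fin (C := m.+2%:R * (r + r ^+ 2) / e ^+ 2)); first by move=> k; exact: pr_ge0.
  by move=> J; exact: sumEv_bound.
by move=> j _; rewrite prE //; exact: mEv.
Qed.

Definition G k := [set w | (k.+1 < t k.+1 w)%N].

Lemma mG k : measurable (G k).
Proof. exact: (Fm hF (ht (ltn0Sn k) [set i | (k.+1 < i)%N])). Qed.

Lemma PG_le k : (P (G k) <= \sum_(0 <= i <oo) (if (k.+1 < i)%N then (p i)%:E else 0))%E.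
Proof.
have -> : G k = \bigcup_(i in [set i | (k.+1 < i)%N]) [set w | t k.+1 w = i].
  apply/seteqP; split => [w /= h|w [i /= h1 e]]; first by exists (t k.+1 w).
  by rewrite /G /= e.
rewrite measure_bigcup //; last first.
  by move=> i j _ _ [w [/= <- <-]].
  move=> i _; exact: (Fm hF (ht (ltn0Sn k) [set i])).
rewrite eseries_mkcond; apply: lee_nneseries => i _.
  by case: ifP => // _; exact: measure_ge0.
have -> : (i \in [set i0 | (k.+1 < i0)%N]) = (k.+1 < i)%N by apply/idP/idP => [/set_mem|/mem_set].
case: ifP => // _.
have := hb (n := k.+1) (ltn0Sn k) i (saT (Fsa hF k)).
by rewrite setTI probability_setT mule1.
Qed.

Lemma inner_series i : (\sum_(0 <= k <oo) (if (k.+1 < i)%N then (p i)%:E else 0) <=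
   (i%:R * p i)%:E)%E.
Proof.
rewrite (nneseries_split 0%N i); last by move=> k _; case: ifP => // _; rewrite lee_fin p_ge0.
rewrite add0n eseries0 ?adde0; last by move=> k ik _; case: ifP => //; lia.
apply: (@le_trans _ _ (\sum_(0 <= k < i) (p i)%:E)).
  by apply: lee_sum => k _; case: ifP => // _; rewrite lee_fin p_ge0.
by rewrite sumEFin lee_fin sumr_const_nat subn0 mulr_natl.
Qed.

Lemma G_sum : (\sum_(1 <= k <oo) ((k%:R * p k)%:E) < +oo)%E ->
  (\sum_(0 <= k <oo) P (G k) < +oo)%E.
Proof.
move=> hR.
apply: (@le_lt_trans _ _ (\sum_(0 <= k <oo) \sum_(0 <= i <oo)
   (if (k.+1 < i)%N then (p i)%:E else 0))%E).
  by apply: lee_nneseries => k _; [move=> _; exact: measure_ge0|exact: PG_le].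
rewrite nneseries_interchange; last by move=> i j; case: ifP => // _; rewrite lee_fin p_ge0.
apply: (@le_lt_trans _ _ (\sum_(0 <= i <oo) ((i%:R * p i)%:E))%E).
  by apply: lee_nneseries => i _; [move=> _; apply: nneseries_ge0 => k _ _; case: ifP => // _; rewrite lee_fin p_ge0|exact: inner_series].
rewrite nneseries_recl //; last by move=> k _; rewrite lee_fin mulr_ge0 ?p_ge0.
by rewrite mul0r add0e.
Qed.
End main.
Unset Implicit Arguments.

Lemma not_lim_sup (T : Type) (E : nat -> set T) w : ~ lim_sup_set E w ->
  exists n, forall j, (n <= j)%N -> ~ E j w.
Proof.
move=> h; apply/not_existsP => h2; apply: h => n _.
have := h2 n; move/existsNP => [j /=].
have [nj|nj] := boolP (n <= j)%N.
  by move=> hj; exists j => //; apply: contrapT => /(fun x => hj (fun _ => x)).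
by move=> hj; exfalso; apply: hj => /negP.
Qed.

Theorem proposition6p4 (d : measure_display) (T : measurableType d)
  (R : realType) (P : probability T R) (F : nat -> set (set T))
  (t : nat -> T -> nat) (p : nat -> R) :
  is_filtration F ->
  adapted_from1 F t ->
  (forall k, 0 <= p k <= 1) ->
  cond_prob_bound P F t p ->
  (\sum_(1 <= k <oo) ((k%:R * p k)%:E) < +oo)%E ->
  {ae P, forall w,
     (limn_esup (fun n => ((n%:R)^-1 * (\sum_(1 <= k < n.+1) (t k w)%:R))%:E)
      <= \sum_(1 <= k <oo) ((k%:R * p k)%:E))%E}.
Proof.
move=> hF ht hp hb hR.
have p0 k : 0 <= p k by case/andP: (hp k).
set Rs := (\sum_(1 <= k <oo) ((k%:R * p k)%:E))%E.
have Rs0 : (0 <= Rs)%E by apply: nneseries_ge0 => n _ _; rewrite lee_fin mulr_ge0.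
have Rfin : Rs \is a fin_num by rewrite ge0_fin_numE.
set r := fine Rs.
have Rr : Rs = r%:E by rewrite fineK.
have hr : forall N, \sum_(k < N) k%:R * p k <= r.
  move=> N; rewrite -lee_fin -Rr.
  case: N => [|N]; first by rewrite big_ord0.
  rewrite -(big_mkord xpredT (fun k => k%:R * p k)) big_ltn // mul0r add0r -sumEFin.
  by apply: nneseries_lim_ge => n _ _; rewrite lee_fin mulr_ge0.
have r0 : 0 <= r by rewrite -lee_fin -Rr.
pose NS := lim_sup_set (G t) `|` \bigcup_m lim_sup_set (Ev t r m (m.+1%:R^-1)).
have nNS : P.-negligible NS.
  apply: negligibleU.
    exists (lim_sup_set (G t)); split => //.
      apply: bigcapT_measurable => n; apply: bigcup_measurable => j _.
      exact: (mG hF ht).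
    apply: lim_sup_set_cvg0; first exact: (mG hF ht).
    exact: (G_sum hF ht hp hb).
  apply: negligible_bigcup => m.
  exists (lim_sup_set (Ev t r m (m.+1%:R^-1))); split => //.
    apply: bigcapT_measurable => n; apply: bigcup_measurable => j _.
    exact: (mEv r hF ht).
  apply: (Ev_null hF ht hp hb hr).
  by rewrite invr_gt0 ltr0n.
apply: (negligibleS _ nNS) => w /= hw.
have [//|nNSw] := pselect (NS w).
exfalso; apply: hw; rewrite Rr.
have [K hK] : exists K, forall j, (K <= j)%N -> ~ G t j w.
  by apply: not_lim_sup => h; apply: nNSw; left.
apply: (detC (a := fun k => t k w) r0 (K := K)).
  by move=> k /hK; rewrite /G /= => /negP; rewrite -leqNgt.
move=> m.
have [J hJ] : exists J, forall j, (J <= j)%N -> ~ Ev t r m (m.+1%:R^-1) j w.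
  by apply: not_lim_sup => h; apply: nNSw; right; exists m.
exists J => j /hJ; rewrite /Ev /= => /negP; rewrite -leNgt.
by [].
Qed.
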